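(* Under the rank assumptions stated in the context, let $S_{j}:=\{y+s v_j: y\in \mathrm{relint}(F_{j}), s> 0\}$. Then $S_{j}$ and $S_{k}$ are disjoint for any $j\neq k$.
   Context: Let $d\geq 3$, let $v_1,\dots,v_d\in\mathbb{R}^d$ be distinct unit vectors and $b_1,\dots,b_d$ real numbers, and let $A=\{x\in \mathbb{R}^d:\ x\cdot v_j\leq b_j\ \text{for}\ j=1,\dots, d\}$ be a (possibly unbounded) convex polytope. For each $j$, $F_j$ denotes the (possible) facet of $A$ corresponding to $v_j$ (the part of $A$ on the hyperplane $\{x: x\cdot v_j=b_j\}$), and $\mathrm{relint}$ denotes relative interior. The following rank assumptions are imposed: for any $1\leq j<k\leq d$, if $\operatorname{rank} \begin{bmatrix} v_j & v_k \end{bmatrix}<2$, then $\operatorname{rank} \begin{bmatrix} v_j & v_k\end{bmatrix}<\operatorname{rank} \begin{bmatrix} v_j & v_k\\ b_j&b_k \end{bmatrix}$; for any $1\leq j<k<l\leq d$, if $\operatorname{rank} \begin{bmatrix} v_j & v_k & v_l\end{bmatrix}<3$, then $\operatorname{rank} \begin{bmatrix} v_j & v_k & v_l\end{bmatrix}<\operatorname{rank} \begin{bmatrix} v_j & v_k & v_l\\ b_j&b_k&b_l \end{bmatrix}$; for any $1\leq j<k<l<s\leq d$, if $\operatorname{rank} \begin{bmatrix} v_j & v_k & v_l& v_s\end{bmatrix}<4$, then $\operatorname{rank} \begin{bmatrix} v_j & v_k & v_l& v_s\end{bmatrix}<\operatorname{rank} \begin{bmatrix} v_j & v_k & v_l&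 v_s\\ b_j&b_k&b_l&b_s \end{bmatrix}$. *)

(* Defs.v *)
From HB Require Import structures.
From mathcomp Require Import all_boot all_order all_algebra.
From mathcomp Require Import reals.
Set Implicit Arguments. Unset Strict Implicit. Unset Printing Implicit Defensive.
Import Order.TTheory GRing.Theory Num.Theory.
Local Open Scope ring_scope.

Definition dotv (R : realType) (d : nat) (x y : 'rV[R]_d) : R :=
  \sum_(i < d) x 0 i * y 0 i.

Definition normsq (R : realType) (d : nat) (x : 'rV[R]_d) : R := dotv x x.

Definition polyA (R : realType) (d : nat) (v : 'I_d -> 'rV[R]_d) (b : 'I_d -> R)
  (x : 'rV[R]_d) : Prop := forall j, dotv x (v j) <= b j.

Definition facet (R : realType) (d : nat) (v : 'I_d -> 'rV[R]_d) (b : 'I_d -> R)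
  (j : 'I_d) (x : 'rV[R]_d) : Prop := polyA v b x /\ dotv x (v j) = b j.

Definition aff_hull (R : realType) (d : nat) (F : 'rV[R]_d -> Prop)
  (x : 'rV[R]_d) : Prop :=
  exists (n : nat) (p : 'I_n -> 'rV[R]_d) (w : 'I_n -> R),
    (forall i, F (p i)) /\ \sum_(i < n) w i = 1 /\ x = \sum_(i < n) w i *: p i.

(* relative interior: points of F having a Euclidean ball (of radius sqrt e)
   whose intersection with aff(F) lies in F *)
Definition relint (R : realType) (d : nat) (F : 'rV[R]_d -> Prop)
  (x : 'rV[R]_d) : Prop :=
  F x /\ exists e : R, 0 < e /\
    forall y, aff_hull F y -> normsq (y - x) < e -> F y.

Definition Sset (R : realType) (d : nat) (v : 'I_d -> 'rV[R]_d) (b : 'I_d -> R)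
  (j : 'I_d) (z : 'rV[R]_d) : Prop :=
  exists (y : 'rV[R]_d) (s : R),
    relint (facet v b j) y /\ 0 < s /\ z = y + s *: v j.

Definition vmat (R : realType) (d m : nat) (v : 'I_d -> 'rV[R]_d)
  (f : 'I_m -> 'I_d) : 'M[R]_(d, m) := \matrix_(i < d, l < m) v (f l) 0 i.

Definition vbmat (R : realType) (d m : nat) (v : 'I_d -> 'rV[R]_d)
  (b : 'I_d -> R) (f : 'I_m -> 'I_d) : 'M[R]_(d + 1, m) :=
  col_mx (vmat v f) (\row_(l < m) b (f l)).

Definition rank_cond (R : realType) (d m : nat) (v : 'I_d -> 'rV[R]_d)
  (b : 'I_d -> R) (f : 'I_m -> 'I_d) : Prop :=
  (\rank (vmat v f) < m)%N -> (\rank (vmat v f) < \rank (vbmat v b f))%N.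

(* Main.v *)
Require Import Defs.
From HB Require Import structures.
From mathcomp Require Import all_boot all_order all_algebra.
From mathcomp Require Import reals.
From mathcomp Require Import ring lra.
Import Order.TTheory GRing.Theory Num.Theory.
Local Open Scope ring_scope.

Section Aux.
Variables (R : realType) (d : nat).
Implicit Types x y z : 'rV[R]_d.

Lemma dotvDl x y z : dotv (x + y) z = dotv x z + dotv y z.
Proof. by rewrite /dotv -big_split; apply: eq_bigr => i _; rewrite mxE mulrDl. Qed.

Lemma dotvZl a x z : dotv (a *: x) z = a * dotv x z.
Proof. by rewrite /dotv mulr_sumr; apply: eq_bigr => i _; rewrite mxE mulrA. Qed.

Lemma dotvC x y : dotv x y = dotv y x.
Proof. by apply: eq_bigr => i _; rewrite mulrC. Qed.

Lemma dotvNl x z : dotv (- x) z = - dotv x z.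
Proof. by rewrite -scaleN1r dotvZl mulN1r. Qed.

Lemma dotvBl x y z : dotv (x - y) z = dotv x z - dotv y z.
Proof. by rewrite dotvDl dotvNl. Qed.

Lemma dotvDr x y z : dotv z (x + y) = dotv z x + dotv z y.
Proof. by rewrite dotvC dotvDl !(dotvC z). Qed.

Lemma dotvZr a x z : dotv z (a *: x) = a * dotv z x.
Proof. by rewrite dotvC dotvZl dotvC. Qed.

Lemma dotvBr x y z : dotv z (x - y) = dotv z x - dotv z y.
Proof. by rewrite dotvC dotvBl !(dotvC z). Qed.

Lemma normsq_eq0 x : dotv x x <= 0 -> x = 0.
Proof.
move=> H.
have H0 : \sum_(i < d) x 0 i * x 0 i = 0.
  apply/eqP; rewrite eq_le H /=.
  by apply: sumr_ge0 => i _; rewrite -expr2 sqr_ge0.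
apply/rowP => i; rewrite mxE.
have Hp : forall i : 'I_d, true -> 0 <= x 0 i * x 0 i.
  by move=> l _; rewrite -expr2 sqr_ge0.
have := @psumr_eq0P _ _ xpredT (fun l => x 0 l * x 0 l) Hp H0 i isT.
by move=> /eqP; rewrite -expr2 sqrf_eq0 => /eqP.
Qed.
End Aux.

Theorem lemma6p2 (R : realType) (d : nat) (hd : (3 <= d)%N)
  (v : 'I_d -> 'rV[R]_d) (b : 'I_d -> R)
  (v_inj : injective v) (v_unit : forall j, normsq (v j) = 1)
  (rank2 : forall j k : 'I_d, (j < k)%N ->
     rank_cond v b (tnth [tuple j; k]))
  (rank3 : forall j k l : 'I_d, (j < k)%N -> (k < l)%N ->
     rank_cond v b (tnth [tuple j; k; l]))
  (rank4 : forall j k l s : 'I_d, (j < k)%N -> (k < l)%N -> (l < s)%N ->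
     rank_cond v b (tnth [tuple j; k; l; s])) :
  forall j k : 'I_d, j != k ->
    forall z : 'rV[R]_d, ~ (Sset v b j z /\ Sset v b k z).
Proof.
move=> j k njk z [[y [s [[[Ay Ey] _] [s0 ->]]]] [y' [s' [[[Ay' Ey'] _] [s0' E]]]]].
have h1 := Ay' j. have h2 := Ay k.
have Ew : y' - y = s *: v j - s' *: v k.
  rewrite -(addrK (s' *: v k) y') -E.
  by rewrite [y + _]addrC addrAC addrK.
have Hn : dotv (y' - y) (y' - y) <= 0.
  rewrite {2}Ew dotvBr !dotvZr.
  have : dotv y' (v j) - dotv y (v j) <= 0 by rewrite Ey subr_le0.
  have : 0 <= dotv y' (v k) - dotv y (v k) by rewrite Ey' subr_ge0.
  move=> a c; rewrite !dotvBl; nra.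
have /eqP := @normsq_eq0 R d _ Hn; rewrite subr_eq0 => /eqP Eyy.
move: Ew; rewrite Eyy subrr => /esym /eqP; rewrite subr_eq0 => /eqP Es.
have uj := v_unit j; have uk := v_unit k; rewrite /normsq in uj uk.
have : dotv (s *: v j) (s *: v j) = dotv (s' *: v k) (s' *: v k) by rewrite Es.
rewrite !dotvZl !dotvZr uj uk => Hss.
have ss : s = s' by nra.
move: Es; rewrite ss => /eqP; rewrite -subr_eq0 -scalerBr scaler_eq0.
rewrite (gt_eqF s0') /= subr_eq0 => /eqP /v_inj ejk.
by rewrite ejk eqxx in njk.
Qed.
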